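(* Let $\bar x$ be a sparsest solution of problem (P), and let $\tilde X$ be an optimal solution of the QBP program for some $\lambda\ge0$. Suppose that: - $\operatorname{rank}(\tilde X)=1$; - $\|\tilde X\|_0<\tfrac12\left(1+\tfrac{1}{\mu(\mathbf{B})}\right)$, with the convention $1/0=\infty$. Then $\tilde X=\begin{bmatrix}1\\ \bar x\end{bmatrix}\begin{bmatrix}1 & \bar x^H\end{bmatrix}$.
   Context: Fix integers $n,N\ge 1$ and data $a_i\in\mathbb{C}$, $b_i,c_i\in\mathbb{C}^n$, $Q_i\in\mathbb{C}^{n\times n}$, $y_i\in\mathbb{C}$ for $i=1,\dots,N$. Problem (P) is $$\min_{x\in\mathbb{C}^n}\|x\|_0\quad\text{subject to}\quad y_i=a_i+b_i^H x+x^H c_i+x^H Q_i x,\quad i=1,\dots,N.$$ Here $\|\cdot\|_0$ counts nonzero entries of a vector or matrix, and ${}^H$ denotes conjugate transpose. Let $\Phi_i=\begin{bmatrix} a_i & b_i^H\\ c_i & Q_i\end{bmatrix}\in\mathbb{C}^{(n+1)\times(n+1)}$. Define the linear operator $B:\mathbb{C}^{(n+1)\times(n+1)}\to\mathbb{C}^N$ by $B(X)=(\operatorname{tr}(\Phi_i X))_{i=1}^N$. The QBP program with parameter $\lambda\ge0$ is $$\min_{X}\ \operatorname{tr}(X)+\lambda\|X\|_1\quad\text{subject to}\quad y_i=\operatorname{tr}(\Phi_i X)\ (i=1,\dots,N),\quad X_{1,1}=1,\quad X\succeq0,$$ where $X$ ranges over Hermitian $(n+1)\times(n+1)$ matrices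 and $\|X\|_1$ is the sum of absolute values of the entries. Let $\mathbf{B}\in\mathbb{C}^{N\times(n+1)^2}$ be the matrix satisfying $B(X)=\mathbf{B}\,\mathrm{vec}(X)$ for all $X$, where $\mathrm{vec}(X)$ is the vectorization of $X$ (stacking its entries into a vector). Assume every column of $\mathbf{B}$ is nonzero. For a matrix $A$ with nonzero columns $A_{:,1},\dots,A_{:,m}$, the mutual coherence is $\mu(A)=\max_{i\ne j}\frac{|A_{:,i}^H A_{:,j}|}{\|A_{:,i}\|\,\|A_{:,j}\|}$, with Euclidean norms. *)

(* Defs.v *)
(* The complex field is modelled by an arbitrary
   numClosedFieldType C (C = ℂ is an instance). *)
From HB Require Import structures.
From mathcomp Require Import all_boot all_order all_algebra.
Set Implicit Arguments. Unset Strict Implicit. Unset Printing Implicit Defensive.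
Import Order.TTheory GRing.Theory Num.Theory.
Local Open Scope ring_scope.

Section Defs.
Variable C : numClosedFieldType.

Definition adjmx (m p : nat) (A : 'M[C]_(m, p)) : 'M[C]_(p, m) :=
  (map_mx Num.conj A)^T.

Definition nnz (m p : nat) (A : 'M[C]_(m, p)) : nat :=
  #|[set ij : 'I_m * 'I_p | A ij.1 ij.2 != 0]|.

Definition l1norm (m p : nat) (A : 'M[C]_(m, p)) : C :=
  \sum_(i < m) \sum_(j < p) `|A i j|.

Definition psd (m : nat) (A : 'M[C]_m) : Prop :=
  forall v : 'cV[C]_m, 0 <= (adjmx v *m A *m v) 0 0.

Definition hermitian (m : nat) (A : 'M[C]_m) : Prop := adjmx A = A.

Definition enorm (m : nat) (v : 'cV[C]_m) : C :=
  sqrtC (\sum_(k < m) `|v k 0| ^+ 2).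

(* mutual coherence of a matrix (max over pairs of distinct columns;
   0 if there are fewer than two columns) *)
Definition coherence (m p : nat) (A : 'M[C]_(m, p)) : C :=
  \big[Num.max/0]_(i < p) \big[Num.max/0]_(j < p | j != i)
     (`|(adjmx (col i A) *m col j A) 0 0| / (enorm (col i A) * enorm (col j A))).

Variables (n N : nat).
Variables (a : 'I_N -> C) (b c : 'I_N -> 'cV[C]_n) (Q : 'I_N -> 'M[C]_n)
          (y : 'I_N -> C).

Definition Phi (i : 'I_N) : 'M[C]_(1 + n) :=
  block_mx (a i)%:M (adjmx (b i)) (c i) (Q i).

Definition P_feasible (x : 'cV[C]_n) : Prop :=
  forall i, y i = a i + (adjmx (b i) *m x) 0 0 + (adjmx x *m c i) 0 0
                  + (adjmx x *m Q i *m x) 0 0.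

Definition sparsest (xb : 'cV[C]_n) : Prop :=
  P_feasible xb /\ forall x, P_feasible x -> (nnz xb <= nnz x)%N.

Definition Bop (X : 'M[C]_(1 + n)) : 'I_N -> C := fun i => \tr (Phi i *m X).

(* matrix of B w.r.t. vec = mxvec: tr(Phi X) = mxvec(Phi^T) . mxvec(X) *)
Definition Bmat : 'M[C]_(N, (1 + n) * (1 + n)) :=
  \matrix_(i, l) mxvec (Phi i)^T 0 l.

Definition QBP_feasible (X : 'M[C]_(1 + n)) : Prop :=
  [/\ hermitian X, forall i, y i = Bop X i, X 0 0 = 1 & psd X].

Definition QBP_obj (lam : C) (X : 'M[C]_(1 + n)) : C := \tr X + lam * l1norm X.

Definition QBP_optimal (lam : C) (X : 'M[C]_(1 + n)) : Prop :=
  QBP_feasible X /\ forall X', QBP_feasible X' -> QBP_obj lam X <= QBP_obj lam X'.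

End Defs.

(* Main.v *)
Require Import Defs.
From HB Require Import structures.
From mathcomp Require Import all_boot all_order all_algebra.
From mathcomp Require Import ring.
Import Order.TTheory GRing.Theory Num.Theory.
Local Open Scope ring_scope.
Set Implicit Arguments. Unset Strict Implicit. Unset Printing Implicit Defensive.

Lemma max_ge0_comp (C : numDomainType) (x y : C) : 0 <= x -> 0 <= y ->
  [/\ x <= Num.max x y, y <= Num.max x y & 0 <= Num.max x y].
Proof.
move=> x0 y0.
have cxy : (x >=< y)%O by apply: real_comparable; apply: ger0_real.
by rewrite !comparable_le_max // !lexx x0 orbT.
Qed.

Lemma bigmax_ge0 (C : numDomainType) (I : finType) (P : pred I) (F : I -> C) :
  (forall i, P i -> 0 <= F i) ->
  0 <= \big[Num.max/0]_(i | P i) F i /\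
  forall i, P i -> F i <= \big[Num.max/0]_(i | P i) F i.
Proof.
move=> F0.
have H : forall r : seq I, 0 <= \big[Num.max/0]_(i <- r | P i) F i /\
  forall i, i \in r -> P i -> F i <= \big[Num.max/0]_(i <- r | P i) F i.
  elim=> [|x r [IH1 IH2]]; first by rewrite big_nil.
  rewrite big_cons; case: ifP => Px.
    case: (@max_ge0_comp C _ _ (F0 x Px) IH1) => h1 h2 h3; split => // i.
    rewrite inE => /orP [/eqP -> //| ir Pi].
    exact: le_trans (IH2 i ir Pi) h2.
  split => // i; rewrite inE => /orP [/eqP -> |ir Pi]; first by rewrite Px.
  exact: IH2.
case: (H (index_enum I)) => h1 h2; split => // i; apply: h2.
by rewrite mem_index_enum.
Qed.

Section Coh.
Variable C : numClosedFieldType.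

Lemma enorm_sq m (v : 'cV[C]_m) : enorm v ^+ 2 = (adjmx v *m v) 0 0.
Proof.
rewrite /enorm sqrtCK !mxE; apply: eq_bigr => k _.
by rewrite !mxE normCK mulrC.
Qed.

Lemma enorm_gt0 m (v : 'cV[C]_m) : v != 0 -> 0 < enorm v.
Proof.
move=> vn0; rewrite /enorm sqrtC_gt0 lt_def; apply/andP; split; last first.
  by apply: sumr_ge0 => k _; rewrite exprn_ge0.
apply/negP => /eqP /psumr_eq0P H; apply/negP: vn0; rewrite negbK.
apply/eqP/matrixP => i j; rewrite (ord1 j) mxE.
have /eqP := H (fun k _ => exprn_ge0 2 (normr_ge0 (v k 0))) i isT.
by rewrite expf_eq0 /= normr_eq0 => /eqP.
Qed.

Lemma coh_ge0 m p (A : 'M[C]_(m, p)) : 0 <= coherence A.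
Proof.
rewrite /coherence; case: (@bigmax_ge0 C _ predT (fun i =>
  \big[Num.max/0]_(j < p | j != i) (`|(adjmx (col i A) *m col j A) 0 0| / (enorm (col i A) * enorm (col j A)))) _) => //.
move=> i _; case: (@bigmax_ge0 C _ (fun j => j != i) (fun j => 
  (`|(adjmx (col i A) *m col j A) 0 0| / (enorm (col i A) * enorm (col j A))))) => //.
move=> j _; apply: divr_ge0 => //; apply: mulr_ge0; rewrite sqrtC_ge0;
  by apply: sumr_ge0 => k _; rewrite exprn_ge0.
Qed.

Lemma coh_bound m p (A : 'M[C]_(m, p)) k l : col k A != 0 -> col l A != 0 -> l != k ->
  `|(adjmx (col k A) *m col l A) 0 0| <= coherence A * (enorm (col k A) * enorm (col l A)).
Proof.
move=> k0 l0 lk.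
have ep : 0 < enorm (col k A) * enorm (col l A) by rewrite mulr_gt0 // enorm_gt0.
rewrite -ler_pdivrMr //.
have G : forall i j, 0 <= `|(adjmx (col i A) *m col j A) 0 0| / (enorm (col i A) * enorm (col j A)).
  move=> i j; apply: divr_ge0 => //; apply: mulr_ge0; rewrite sqrtC_ge0;
  by apply: sumr_ge0 => ? _; rewrite exprn_ge0.
case: (@bigmax_ge0 C _ (fun j => j != k) (fun j =>
  (`|(adjmx (col k A) *m col j A) 0 0| / (enorm (col k A) * enorm (col j A))))) => // _ h1.
case: (@bigmax_ge0 C _ predT (fun i =>
  \big[Num.max/0]_(j < p | j != i) (`|(adjmx (col i A) *m col j A) 0 0| / (enorm (col i A) * enorm (col j A)))) ) => //.
  move=> i _; case: (@bigmax_ge0 C _ (fun j => j != i) (fun j => 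
  (`|(adjmx (col i A) *m col j A) 0 0| / (enorm (col i A) * enorm (col j A))))) => //.
move=> _ h2; exact: le_trans (h1 l lk) (h2 k isT).
Qed.

Lemma kernel_spark m p (A : 'M[C]_(m, p)) (z : 'I_p -> C) :
  (forall l, col l A != 0) -> (forall i, \sum_l A i l * z l = 0) -> (exists l, z l != 0) ->
  1 <= coherence A * (#|[set l | z l != 0]|%:R - 1).
Proof.
move=> cA Az [l0 zl0].
set mu := coherence A.
pose e l := enorm (col l A).
pose g k l : C := (adjmx (col k A) *m col l A) 0 0.
pose w l := e l * `|z l|.
pose W := \sum_l w l.
have e0 : forall l, 0 < e l by move=> l; apply: enorm_gt0.
have w0 : forall l, 0 <= w l by move=> l; rewrite mulr_ge0 // ltW.
have S1 : forall k, \sum_l g k l * z l = 0.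
  move=> k; transitivity (\sum_l \sum_i (A i k)^* * A i l * z l).
    apply: eq_bigr => l _; rewrite /g !mxE mulr_suml; apply: eq_bigr => i _; by rewrite /adjmx !mxE.
  rewrite exchange_big /=.
  apply: big1 => i _.
  under eq_bigr do rewrite -mulrA.
  by rewrite -mulr_sumr Az mulr0.
have S2 : forall k, w k <= mu * (W - w k).
  move=> k; rewrite -(ler_pM2l (e0 k)).
  have : g k k * z k = - \sum_(l | l != k) g k l * z l.
    have := S1 k; rewrite (bigD1 k) //=.
    by move=> /eqP; rewrite addr_eq0 => /eqP.
  move/(congr1 (fun x => `|x|)) => /=; rewrite normrN normrM /g -enorm_sq.
  rewrite (ger0_norm (exprn_ge0 2 (ltW (e0 k)))) => E.
  have -> : e k * w k = e k ^+ 2 * `|z k| by rewrite /w mulrA expr2.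
  have HW : W = w k + \sum_(l | l != k) w l by rewrite /W (bigD1 k).
  rewrite E HW addrAC subrr add0r.
  apply: le_trans (ler_norm_sum _ _ _) _.
  rewrite mulr_sumr mulr_sumr; apply: ler_sum => l lk.
  rewrite normrM /w mulrA mulrA ler_wpM2r //.
  by rewrite mulrC -mulrA (mulrC (e l)); apply: coh_bound.
set S := [set l | z l != 0].
have S4 : \sum_(k in S) w k = W.
  rewrite /W [RHS](bigID (fun l => l \in S)) /= [X in _ + X]big1 ?addr0 //.
  by move=> l; rewrite inE negbK => /eqP zl; rewrite /w zl normr0 mulr0.
have Wp : 0 < W.
  rewrite /W (bigD1 l0) //=; apply: (@lt_le_trans _ _ (w l0)).
    by rewrite /w mulr_gt0 // normr_gt0.
  by rewrite lerDl sumr_ge0.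
have S5 : W <= mu * (#|S|%:R - 1) * W.
  rewrite -{1}S4; apply: le_trans (ler_sum _ (fun k _ => S2 k)) _.
  rewrite -mulr_sumr sumrB S4 sumr_const -[W *+ _]mulr_natl.
  by rewrite -mulrA mulrBl mul1r.
by rewrite -(ler_pM2r Wp) mul1r.
Qed.
End Coh.

Section B.
Variable C : numClosedFieldType.
Variables (n N : nat).
Variables (a : 'I_N -> C) (b c : 'I_N -> 'cV[C]_n) (Q : 'I_N -> 'M[C]_n).

Lemma sum_mxvec m p (F : 'I_(m * p) -> C) :
  \sum_l F l = \sum_i \sum_j F (mxvec_index i j).
Proof.
rewrite (reindex (uncurry (@mxvec_index m p))) /=; last first.
  by case: (@curry_mxvec_bij m p) => g h1 h2; exists g => x _; [apply: h1|apply: h2].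
by rewrite pair_bigA /=; apply: eq_bigr => -[i j].
Qed.

Lemma Bop_vec X i : Bop a b c Q X i = \sum_l Bmat a b c Q i l * mxvec X 0 l.
Proof.
rewrite sum_mxvec /Bop /mxtrace.
rewrite exchange_big /=; apply: eq_bigr => j _; rewrite mxE.
apply: eq_bigr => k _; by rewrite !mxE !mxvecE !mxE.
Qed.

Lemma Bop_sub X Y i : Bop a b c Q (X - Y) i = Bop a b c Q X i - Bop a b c Q Y i.
Proof. by rewrite /Bop mulmxBr linearB. Qed.

Lemma addE m p (A B : 'M[C]_(m, p)) i j : (A + B) i j = A i j + B i j.
Proof. by rewrite mxE. Qed.

Lemma adj_col (x : 'cV[C]_n) :
  adjmx (col_mx (1%:M : 'M[C]_1) x) = row_mx 1%:M (adjmx x).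
Proof.
rewrite /adjmx map_col_mx tr_col_mx; congr row_mx.
by apply/matrixP => i j; rewrite !ord1 !mxE /= conjC1.
Qed.

Lemma Bop_rank1 (x : 'cV[C]_n) i :
  let u := col_mx (1%:M : 'M[C]_1) x in
  Bop a b c Q (u *m adjmx u) i = a i + (adjmx (b i) *m x) 0 0 + (adjmx x *m c i) 0 0
                  + (adjmx x *m Q i *m x) 0 0.
Proof.
move=> u.
rewrite /Bop mulmxA mxtrace_mulC /u adj_col /Phi mulmxA mul_row_block mul_row_col.
rewrite /mxtrace big_ord1 !mul1mx !mulmx1 mulmxDl !addE.
have -> : ((a i)%:M : 'M[C]_1) ord0 ord0 = a i by rewrite mxE eqxx mulr1n.
rewrite -!addrA; congr (_ + _); rewrite addrCA; congr (_ + _).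
Qed.
End B.

Section R.
Variable C : numClosedFieldType.
Variable n : nat.

Lemma rank1_form (X : 'M[C]_(1 + n)) : \rank X = 1%N -> Defs.hermitian X -> X 0 0 = 1 ->
  X = col_mx (1%:M : 'M[C]_1) (dsubmx (col 0 X)) *m adjmx (col_mx (1%:M : 'M[C]_1) (dsubmx (col 0 X))).
Proof.
move=> rk hX X00.
have H : forall i j, X i j * X 0 0 = X i 0 * X 0 j.
  have := mulmx_base X; move: (col_base X) (row_base X); rewrite rk => cb rb E i j.
  rewrite -E !mxE !big_ord1; ring.
have hu : col_mx (1%:M : 'M[C]_1) (dsubmx (col 0 X)) = col 0 X.
  rewrite -[RHS]vsubmxK; congr col_mx.
  apply/matrixP => i j; rewrite !ord1 !mxE /=.
  by rewrite (_ : lshift n 0 = 0) ?X00 //; apply: val_inj.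
rewrite hu; apply/matrixP => i j.
rewrite !mxE big_ord1 !mxE.
have <- : X 0 j = (X j 0)^* by rewrite -{1}hX !mxE.
by rewrite -H X00 mulr1.
Qed.
End R.

Section Cnt.
Variable C : numClosedFieldType.

Lemma nnz_col m (v : 'cV[C]_m) : nnz v = #|[set i | v i 0 != 0]|.
Proof.
rewrite /nnz -[RHS](card_imset _ (f := fun i => (i, ord0 : 'I_1))); last by move=> i i' [].
apply: eq_card => -[i j]; rewrite (ord1 j) inE /=; apply/idP/imsetP.
  by move=> h; exists i; rewrite ?inE.
by case=> i0; rewrite inE => h /(congr1 fst) /= ->.
Qed.
Lemma nnz_outer m (v : 'cV[C]_m) : nnz (v *m adjmx v) = expn #|[set i | v i 0 != 0]| 2.
Proof.
rewrite /nnz expnS expn1 -cardsX; apply: eq_card => -[i j].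
rewrite !inE /= !mxE big_ord1 !mxE mulf_eq0 conjC_eq0 negb_or.
by [].
Qed.

Lemma card_colmx n (x : 'cV[C]_n) :
  #|[set i | col_mx (1%:M : 'M[C]_1) x i 0 != 0]| = addn 1 #|[set i | x i 0 != 0]|.
Proof.
have -> : [set i | col_mx (1%:M : 'M[C]_1) x i 0 != 0] = 
   lshift n 0 |: (@rshift 1 n) @: [set i | x i 0 != 0].
  apply/setP => i; rewrite !inE; case: (split_ordP i) => k -> .
    rewrite (ord1 k) col_mxEu mxE eqxx /=.
    by rewrite oner_eq0 ?eqxx.
  rewrite col_mxEd (_ : (rshift 1 k == lshift n 0) = false) /=; last first.
    by apply/negbTE; apply/eqP => /(congr1 val).
  apply/idP/imsetP; first by move=> h; exists k; rewrite ?inE.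
  by case=> k'; rewrite inE => h /rshift_inj ->.
rewrite cardsU1 card_imset; last exact: rshift_inj.
congr (_ + _)%N; apply/eqP; rewrite eqb1; apply/imsetP; case=> k _.
by move/(congr1 val).
Qed.
End Cnt.

Theorem mainTheorem5 (C : numClosedFieldType) (n N : nat)
  (a : 'I_N -> C) (b c : 'I_N -> 'cV[C]_n) (Q : 'I_N -> 'M[C]_n) (y : 'I_N -> C)
  (lam : C) (xb : 'cV[C]_n) (Xt : 'M[C]_(1 + n)) :
  (forall l, col l (Bmat a b c Q) != 0) ->
  0 <= lam ->
  sparsest a b c Q y xb ->
  QBP_optimal a b c Q y lam Xt ->
  \rank Xt = 1%N ->
  (coherence (Bmat a b c Q) == 0) ||
    ((nnz Xt)%:R < (1 + (coherence (Bmat a b c Q))^-1) / 2) ->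
  Xt = col_mx (1%:M : 'M[C]_1) xb *m adjmx (col_mx (1%:M : 'M[C]_1) xb).
Proof.
move=> cB lam0 [Pxb spx] [[hX yX X00 psdX] _] rk hcoh.
have EX := rank1_form rk hX X00.
set x := dsubmx (col 0 Xt) in EX.
have Px : P_feasible a b c Q y x by move=> i; rewrite (yX i) EX Bop_rank1.
have le_nnz : (nnz xb <= nnz x)%N := spx x Px.
set Xb := col_mx (1%:M : 'M[C]_1) xb *m adjmx (col_mx (1%:M : 'M[C]_1) xb).
have yXb : forall i, y i = Bop a b c Q Xb i by move=> i; rewrite Bop_rank1 Pxb.
apply/eqP; rewrite -subr_eq0; apply/negP => /negP D0.
set D := Xt - Xb in D0.
pose z l := mxvec D 0 l.
have Az : forall i, \sum_l Bmat a b c Q i l * z l = 0.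
  by move=> i; rewrite -Bop_vec Bop_sub -yX -yXb subrr.
have ex : exists l, z l != 0.
  apply/existsP; apply: contraR D0 => /existsPn H.
  rewrite -mxvec_eq0; apply/eqP/rowP => l; rewrite [RHS]mxE.
  by have := H l; rewrite negbK => /eqP.
have K := kernel_spark cB Az ex.
set S := [set l | z l != 0] in K.
have cS : (#|S| <= 2 * nnz Xt)%N.
  have s1 : (#|S| <= nnz D)%N.
    rewrite /nnz; apply: leq_trans (leq_imset_card (uncurry (@mxvec_index _ _)) _).
    apply: subset_leq_card; apply/subsetP => l; rewrite inE.
    case/mxvec_indexP: l => i j; rewrite /z mxvecE => h.
    by apply/imsetP; exists (i, j); rewrite ?inE.
  have s2 : (nnz D <= nnz Xt + nnz Xb)%N.
    rewrite /nnz; apply: (@leq_trans #|[set ij | Xt ij.1 ij.2 != 0] :|: [set ij | Xb ij.1 ij.2 != 0]|).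
      apply: subset_leq_card; apply/subsetP => -[i j]; rewrite !inE /= /D mxE => h.
      apply: contraR h; rewrite negb_or !negbK [(- Xb) i j]mxE => /andP[/eqP -> /eqP ->]; by rewrite subrr.
    by rewrite cardsU leq_subr.
  have s3 : (nnz Xb <= nnz Xt)%N.
    rewrite [in X in (_ <= X)%N]EX /Xb !nnz_outer !card_colmx -!nnz_col leq_exp2r // leq_add2l.
  rewrite mul2n -addnn; apply: leq_trans s1 (leq_trans s2 _).
  by rewrite leq_add2l.
set mu := coherence _ in K hcoh.
have mu0 : 0 <= mu := coh_ge0 _.
have mup : 0 < mu.
  rewrite lt_def mu0 andbT; apply/eqP => m0; move: K; by rewrite m0 mul0r ler10.
case/orP: hcoh => [/eqP m0|hlt]; first by move: mup; rewrite m0 ltxx.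
have h1 : ((#|S|)%:R : C) <= 2 * (nnz Xt)%:R by rewrite -natrM ler_nat.
have h2 : 2 * (nnz Xt)%:R < 1 + mu^-1 by rewrite mulrC -ltr_pdivlMr.
have h3 : (#|S|)%:R - 1 < mu^-1 by rewrite ltrBlDr addrC; exact: le_lt_trans h1 h2.
have h4 : mu * ((#|S|)%:R - 1) < 1.
  by rewrite -[X in _ < X](mulfV (negbT (gt_eqF mup))) ltr_pM2l.
by have := le_lt_trans K h4; rewrite ltxx.
Qed.
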